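(* Let $d\ge1$, let $\nu_0:\mathbb{Z}^d\to[0,\infty)$ have finite support, and let $x_1,x_2,\ldots\in\mathbb{Z}^d$ be a sequence in which every $x\in\mathbb{Z}^d$ appears infinitely often. Let $u_k(x)$ be the total mass emitted by $x$ and $\nu_k(x)$ the mass present at $x$ after starting from $\nu_0$ and toppling $x_1,\ldots,x_k$ in succession. Then $u_k\uparrow u$ and $\nu_k\to\nu$ pointwise, where $u$ is finite and $\nu\le 1$. Moreover, the limits $u$ and $\nu$ do not depend on the choice of the sequence $(x_k)$.
   Context: Divisible sandpile: a mass distribution is a function $\mu:\mathbb{Z}^d\to[0,\infty)$. Toppling a site $x$ replaces $\mu$ by $\mu+\alpha\,\Delta\delta_x$ where $\alpha=\max(\mu(x)-1,0)$; i.e. if $\mu(x)>1$, the site keeps mass $1$ and sends mass $(\mu(x)-1)/(2d)$ to each of its $2d$ lattice neighbors, and if $\mu(x)\le1$ nothing happens. The mass emitted by $x$ in that toppling is $\alpha$. Here $\Delta f(x)=\frac{1}{2d}\sum_{y\sim x}f(y)-f(x)$ is the discrete Laplacian, the sum over the $2d$ lattice neighbors of $x$, and $\delta_x$ is the indicator of $\{x\}$. *)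

(* Defs.v *)
From Stdlib Require Import Reals Lra Lia ZArith List.
Import ListNotations.
Open Scope R_scope.

(* A site of Z^d is represented by a list of integers of length d.
   Only lists of length d are ever considered in the statement. *)
Definition site := list Z.

Definition site_eq_dec : forall x y : site, {x = y} + {x <> y} :=
  list_eq_dec Z.eq_dec.

(* x + c e_i *)
Definition shift (x : site) (i : nat) (c : Z) : site :=
  firstn i x ++ (nth i x 0%Z + c)%Z :: skipn (S i) x.

Definition neighbors (d : nat) (x : site) : list site :=
  flat_map (fun i => [shift x i 1%Z; shift x i (-1)%Z]) (seq 0 d).

Definition laplacian (d : nat) (f : site -> R) (x : site) : R :=
  / (2 * INR d) * fold_right Rplus 0 (map f (neighbors d x)) - f x.

Definition delta (x : site) : site -> R :=
  fun y => if site_eq_dec y x then 1 else 0.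

Definition emitted (mu : site -> R) (x : site) : R := Rmax (mu x - 1) 0.

Definition topple (d : nat) (mu : site -> R) (x : site) : site -> R :=
  fun y => mu y + emitted mu x * laplacian d (delta x) y.

(* (nu_k, u_k): configuration and odometer after toppling xs 0, ..., xs (k-1)
   (i.e. x_1, ..., x_k in the paper's 1-based indexing). *)
Fixpoint run (d : nat) (nu0 : site -> R) (xs : nat -> site) (k : nat)
  : (site -> R) * (site -> R) :=
  match k with
  | O => (nu0, fun _ => 0)
  | S k' =>
      let (nu, u) := run d nu0 xs k' in
      let x := xs k' in
      (topple d nu x,
       fun y => u y + (if site_eq_dec y x then emitted nu x else 0))
  end.

Definition nu_k d nu0 xs k : site -> R := fst (run d nu0 xs k).
Definition u_k d nu0 xs k : site -> R := snd (run d nu0 xs k).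

Definition visits_all_io (d : nat) (xs : nat -> site) : Prop :=
  (forall k, length (xs k) = d) /\
  (forall x : site, length x = d -> forall N, exists k, (N <= k)%nat /\ xs k = x).

(* Main.v *)
From Pilot Require Import Defs.
From Stdlib Require Import Reals List.
From Stdlib Require Import Lra Lia ZArith Classical ClassicalEpsilon.
Import Pilot.Defs.
Import ListNotations.
Open Scope R_scope.

Definition sumR (l : list R) := fold_right Rplus 0 l.

Lemma sum_le {A} (f g : A -> R) (l : list A) :
  (forall z, In z l -> f z <= g z) ->
  fold_right Rplus 0 (map f l) <= fold_right Rplus 0 (map g l).
Proof.
  induction l as [|a l IH]; simpl; intros H; [lra|].
  apply Rplus_le_compat; auto.
Qed.

Lemma sum_lin {A} (f g : A -> R) (e : R) (l : list A) :
  fold_right Rplus 0 (map (fun y => f y + e * g y) l) =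
  fold_right Rplus 0 (map f l) + e * fold_right Rplus 0 (map g l).
Proof. induction l as [|a l IH]; simpl; [ring|]. rewrite IH; ring. Qed.

Lemma sum_zero {A} (f : A -> R) (l : list A) :
  (forall z, In z l -> f z = 0) -> fold_right Rplus 0 (map f l) = 0.
Proof.
  induction l as [|a l IH]; simpl; intros H; [lra|].
  rewrite H by auto. rewrite IH by auto. ring.
Qed.

Lemma sum_ext {A} (f g : A -> R) (l : list A) :
  (forall z, In z l -> f z = g z) ->
  fold_right Rplus 0 (map f l) = fold_right Rplus 0 (map g l).
Proof.
  induction l as [|a l IH]; simpl; intros H; [lra|].
  rewrite H by auto. rewrite IH by auto. ring.
Qed.

Lemma lap_ext d f g x : (forall y, In y (neighbors d x) -> f y = g y) -> f x = g x ->
  laplacian d f x = laplacian d g x.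
Proof. intros H1 H2. unfold laplacian. rewrite (sum_ext f g) by auto. rewrite H2; ring. Qed.

Lemma length_shift (x : site) i (c : Z) : (i < length x)%nat -> length (shift x i c) = length x.
Proof.
  intros H. unfold shift. rewrite length_app, firstn_length_le by lia. cbn [length].
  rewrite length_skipn. lia.
Qed.

Lemma nth_shift (x : site) i (c : Z) : (i < length x)%nat -> nth i (shift x i c) 0%Z = (nth i x 0%Z + c)%Z.
Proof.
  intros H. unfold shift. rewrite app_nth2; rewrite firstn_length_le by lia; [|lia].
  rewrite Nat.sub_diag. reflexivity.
Qed.

Lemma in_neighbors d (x y : site) : In y (neighbors d x) ->
  exists i, (i < d)%nat /\ (y = shift x i 1 \/ y = shift x i (-1)).
Proof.
  unfold neighbors. rewrite in_flat_map. intros [i [Hi Hy]].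
  apply in_seq in Hi. exists i. split; [lia|]. simpl in Hy. intuition.
Qed.

Lemma neighbors_length d (x y : site) : length x = d -> In y (neighbors d x) -> length y = d.
Proof.
  intros Hx Hy. destruct (in_neighbors _ _ _ Hy) as [i [Hi [-> | ->]]];
  rewrite length_shift; lia.
Qed.

Lemma neighbors_neq d (x y : site) : length x = d -> In y (neighbors d x) -> y <> x.
Proof.
  intros Hx Hy E. destruct (in_neighbors _ _ _ Hy) as [i [Hi [H | H]]]; rewrite H in E;
  assert (E2 := f_equal (fun l => nth i l 0%Z) E); simpl in E2;
  rewrite nth_shift in E2 by lia; lia.
Qed.

Lemma run_S d nu0 xs k :
  run d nu0 xs (S k) =
  (topple d (nu_k d nu0 xs k) (xs k),
   fun y => u_k d nu0 xs k y +
     (if site_eq_dec y (xs k) then emitted (nu_k d nu0 xs k) (xs k) else 0)).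
Proof. unfold nu_k, u_k. simpl. destruct (run d nu0 xs k); reflexivity. Qed.

Lemma nu_S d nu0 xs k y : nu_k d nu0 xs (S k) y = topple d (nu_k d nu0 xs k) (xs k) y.
Proof. unfold nu_k at 1. rewrite run_S. reflexivity. Qed.

Lemma u_S d nu0 xs k y : u_k d nu0 xs (S k) y = u_k d nu0 xs k y +
     (if site_eq_dec y (xs k) then emitted (nu_k d nu0 xs k) (xs k) else 0).
Proof. unfold u_k at 1. rewrite run_S. reflexivity. Qed.

Lemma emitted_nonneg mu x : 0 <= emitted mu x.
Proof. unfold emitted. apply Rmax_r. Qed.

Lemma u_mono d nu0 xs k y : u_k d nu0 xs k y <= u_k d nu0 xs (S k) y.
Proof.
  rewrite u_S. destruct site_eq_dec; [pose proof (emitted_nonneg (nu_k d nu0 xs k) (xs k))|]; lra.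
Qed.

Lemma u_nonneg d nu0 xs k y : 0 <= u_k d nu0 xs k y.
Proof.
  induction k. unfold u_k; simpl; lra.
  pose proof (u_mono d nu0 xs k y); lra.
Qed.

Lemma invariant d nu0 xs k y :
  nu_k d nu0 xs k y = nu0 y + laplacian d (u_k d nu0 xs k) y.
Proof.
  revert y; induction k; intros y.
  - unfold nu_k, u_k, laplacian; simpl. rewrite sum_zero by auto. ring.
  - rewrite nu_S. unfold topple. rewrite IHk.
    set (e := emitted (nu_k d nu0 xs k) (xs k)).
    rewrite (lap_ext d (u_k d nu0 xs (S k)) (fun y => u_k d nu0 xs k y + e * delta (xs k) y)).
    2,3: intros; rewrite u_S; unfold delta; destruct site_eq_dec; fold e; ring.
    unfold laplacian. rewrite sum_lin. ring.
Qed.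

Lemma dom d nu0 (hd : (1 <= d)%nat) (w : site -> R) :
  (forall y, length y = d -> 0 <= w y) ->
  (forall y, length y = d -> nu0 y + laplacian d w y <= 1) ->
  forall xs, (forall k, length (xs k) = d) ->
  forall k y, length y = d -> u_k d nu0 xs k y <= w y.
Proof.
  intros Hw0 Hw xs Hxs k. induction k; intros y Hy.
  - unfold u_k; simpl; auto.
  - rewrite u_S. destruct site_eq_dec as [E|E]; [|rewrite Rplus_0_r; auto].
    subst y. set (x := xs k) in *. unfold emitted.
    apply Rmax_case; [|rewrite Rplus_0_r; auto].
    rewrite invariant. specialize (Hw x Hy). unfold laplacian in *.
    assert (Hs : fold_right Rplus 0 (map (u_k d nu0 xs k) (neighbors d x))
                 <= fold_right Rplus 0 (map w (neighbors d x))).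
    { apply sum_le. intros z Hz. apply IHk. eapply neighbors_length; eauto. }
    assert (Hp : 0 < / (2 * INR d)).
    { apply Rinv_0_lt_compat. apply lt_0_INR in hd. lra. }
    apply Rmult_le_compat_l with (r := / (2 * INR d)) in Hs; lra.
Qed.

Lemma lap_delta_self d x : length x = d -> laplacian d (delta x) x = -1.
Proof.
  intros Hx. unfold laplacian. rewrite sum_zero.
  - unfold delta. destruct site_eq_dec; [ring|congruence].
  - intros z Hz. unfold delta. destruct site_eq_dec; auto.
    exfalso; eapply neighbors_neq; eauto.
Qed.

Lemma nu_after d nu0 xs k : length (xs k) = d -> nu_k d nu0 xs (S k) (xs k) <= 1.
Proof.
  intros H. rewrite nu_S. unfold topple. rewrite lap_delta_self by auto.
  unfold emitted. apply Rmax_case_strong; intros; lra.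
Qed.

Lemma nu_lim_le1 d nu0 xs x L : visits_all_io d xs -> length x = d ->
  Un_cv (fun k => nu_k d nu0 xs k x) L -> L <= 1.
Proof.
  intros [Hl Hv] Hx Hc. apply Rnot_lt_le. intros HL.
  destruct (Hc (L - 1)) as [N HN]; [lra|].
  destruct (Hv x Hx N) as [k [Hk Ek]].
  specialize (HN (S k) ltac:(lia)). unfold R_dist in HN.
  apply Rabs_def2 in HN. pose proof (nu_after d nu0 xs k (Hl k)). rewrite Ek in H. lra.
Qed.

Lemma cv_const c : Un_cv (fun _ => c) c.
Proof. intros e He. exists O. intros. unfold R_dist. rewrite Rminus_diag, Rabs_R0; lra. Qed.

Lemma cv_sum {A} (f : nat -> A -> R) (g : A -> R) (l : list A) :
  (forall z, In z l -> Un_cv (fun k => f k z) (g z)) ->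
  Un_cv (fun k => fold_right Rplus 0 (map (f k) l)) (fold_right Rplus 0 (map g l)).
Proof.
  induction l as [|a l IH]; simpl; intros H.
  - apply cv_const.
  - apply CV_plus; auto.
Qed.

Lemma cv_lap d (f : nat -> site -> R) (g : site -> R) x :
  (forall z, In z (neighbors d x) -> Un_cv (fun k => f k z) (g z)) ->
  Un_cv (fun k => f k x) (g x) ->
  Un_cv (fun k => laplacian d (f k) x) (laplacian d g x).
Proof.
  intros H1 H2. unfold laplacian. apply CV_minus; auto.
  apply CV_mult; [apply cv_const|]. apply cv_sum; auto.
Qed.

Lemma cv_nu d nu0 xs (U : site -> R) x : length x = d ->
  (forall y, length y = d -> Un_cv (fun k => u_k d nu0 xs k y) (U y)) ->
  Un_cv (fun k => nu_k d nu0 xs k x) (nu0 x + laplacian d U x).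
Proof.
  intros Hx H. eapply Un_cv_ext. { intros n. symmetry. apply invariant. }
  apply CV_plus; [apply cv_const|]. apply cv_lap; auto.
  intros z Hz. apply H. eapply neighbors_length; eauto.
Qed.

Lemma sum_app (l1 l2 : list R) :
  fold_right Rplus 0 (l1 ++ l2) = fold_right Rplus 0 l1 + fold_right Rplus 0 l2.
Proof. induction l1; simpl; [ring|]. rewrite IHl1; ring. Qed.

Lemma lap_coord0 (psi : Z -> R) d' (x0 : Z) (xr : list Z) :
  laplacian (S d') (fun y => psi (nth 0 y 0%Z)) (x0 :: xr) =
  / (2 * INR (S d')) * (psi (x0 + 1)%Z + psi (x0 + -1)%Z - 2 * psi x0).
Proof.
  assert (Hrest : forall n s, (1 <= s)%nat ->
    fold_right Rplus 0 (map (fun y => psi (nth 0 y 0%Z))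
      (flat_map (fun i => [shift (x0 :: xr) i 1%Z; shift (x0 :: xr) i (-1)%Z]) (seq s n)))
    = 2 * INR n * psi x0).
  { induction n as [|n IH]; intros s Hs; simpl; [ring|].
    destruct s as [|s]; [lia|]. simpl. rewrite IH by lia.
    destruct n; simpl; ring. }
  unfold laplacian, neighbors. simpl seq. cbn [flat_map].
  rewrite map_app, sum_app, Hrest by lia. cbn -[INR]. rewrite S_INR. field.
  pose proof (pos_INR d'). lra.
Qed.

Section W.
Variable c b : R.
Definition T (r : R) := c * (Rabs r - b) ^ 2.
Definition E (r : R) := T (r + 1) + T (r - 1) - 2 * T r.

Lemma E_le (k : Z) : 0 <= c -> 0 <= b -> E (IZR k) <= 2 * c.
Proof.
  intros Hc Hb. unfold E, T.
  destruct (Z.lt_trichotomy k 0) as [Hk|[Hk|Hk]].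
  - assert (IZR k <= -1) by (apply IZR_le; lia).
    rewrite (Rabs_left1 (IZR k + 1)) by lra. rewrite (Rabs_left1 (IZR k - 1)) by lra.
    rewrite (Rabs_left1 (IZR k)) by lra. right; ring.
  - subst. replace (IZR 0) with 0 by reflexivity. rewrite Rplus_0_l. replace (0 - 1) with (-1) by ring. rewrite Rabs_R0, Rabs_R1, (Rabs_left1 (-1)) by lra. nra.

  - assert (1 <= IZR k) by (apply IZR_le; lia).
    rewrite (Rabs_pos_eq (IZR k + 1)) by lra. rewrite (Rabs_pos_eq (IZR k - 1)) by lra.
    rewrite (Rabs_pos_eq (IZR k)) by lra. right; ring.
Qed.

Lemma E_0 : E 0 = 2 * c * (1 - 2 * b).
Proof.
  unfold E, T. rewrite Rplus_0_l. replace (0 - 1) with (-1) by ring.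
  rewrite Rabs_R0, Rabs_R1, (Rabs_left1 (-1)) by lra. ring.
Qed.

Definition psi (L : list site) (t : Z) :=
  fold_right Rplus 0 (map (fun z => T (IZR (t - nth 0 z 0%Z))) L).

Lemma psi_diff L t : psi L (t + 1)%Z + psi L (t + -1)%Z - 2 * psi L t =
  fold_right Rplus 0 (map (fun z => E (IZR (t - nth 0 z 0%Z))) L).
Proof.
  induction L as [|z L IH]; unfold psi in *; simpl; [ring|].
  rewrite <- IH. unfold E.
  replace (t + 1 - nth 0 z 0)%Z with ((t - nth 0 z 0) + 1)%Z by ring.
  replace (t + -1 - nth 0 z 0)%Z with ((t - nth 0 z 0) - 1)%Z by ring.
  rewrite (plus_IZR (t - nth 0 z 0%Z)), (minus_IZR (t - nth 0 z 0%Z) 1). ring.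
Qed.

Lemma T_nonneg r : 0 <= c -> 0 <= T r.
Proof. intros. unfold T. apply Rmult_le_pos; auto. apply pow2_ge_0. Qed.
Lemma psi_nonneg L t : 0 <= c -> 0 <= psi L t.
Proof.
  intros Hc. unfold psi. induction L; simpl; [lra|].
  pose proof (T_nonneg (IZR (t - nth 0 a 0%Z)) Hc). lra.
Qed.
End W.

Lemma sum_bound {A} (f : A -> R) (k : R) (l : list A) :
  (forall z, f z <= k) -> fold_right Rplus 0 (map f l) <= INR (length l) * k.
Proof.
  intros H. induction l; cbn -[INR]; [simpl; lra|]. rewrite S_INR. specialize (H a). lra.
Qed.

Lemma sum_bound_in {A} (f : A -> R) (k : R) (l : list A) x :
  In x l -> (forall z, f z <= k) ->
  fold_right Rplus 0 (map f l) + k <= f x + INR (length l) * k.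
Proof.
  intros Hx H. induction l as [|a l IH]; cbn -[INR] in *; [tauto|]. rewrite S_INR.
  destruct Hx as [->|Hx].
  - pose proof (sum_bound f k l H). lra.
  - specialize (IH Hx). specialize (H a). lra.
Qed.

Lemma sum_abs_ge (f : site -> R) (l : list site) x :
  In x l -> f x <= fold_right Rplus 0 (map (fun z => Rabs (f z)) l).
Proof.
  induction l as [|a l IH]; simpl; [tauto|].
  assert (0 <= fold_right Rplus 0 (map (fun z => Rabs (f z)) l)).
  { clear. induction l; simpl; [lra|]. pose proof (Rabs_pos (f a)); lra. }
  intros [->|H0]. pose proof (Rle_abs (f x)); lra.
  pose proof (Rabs_pos (f a)). specialize (IH H0). lra.
Qed.

Lemma sum_abs_nonneg (f : site -> R) (l : list site) :
  0 <= fold_right Rplus 0 (map (fun z => Rabs (f z)) l).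
Proof. induction l; simpl; [lra|]. pose proof (Rabs_pos (f a)); lra. Qed.

Lemma exists_w d (nu0 : site -> R) (hd : (1 <= d)%nat)
  (hfin : exists L : list site, forall x, length x = d -> nu0 x <> 0 -> In x L) :
  exists w : site -> R, (forall y, 0 <= w y) /\
    (forall y, length y = d -> nu0 y + laplacian d w y <= 1).
Proof.
  destruct hfin as [L HL].
  set (N := INR (length L)). set (S0 := fold_right Rplus 0 (map (fun z => Rabs (nu0 z)) L)).
  set (D := INR d).
  assert (HN : 0 <= N) by apply pos_INR.
  assert (HS : 0 <= S0) by apply sum_abs_nonneg.
  assert (HD : 1 <= D) by (apply (le_INR 1 d) in hd; simpl in hd; exact hd).
  set (b := (N + 1) * S0). set (c := D / (N + 1)).
  assert (Hc : 0 <= c) by (unfold c; apply Rle_mult_inv_pos; lra).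
  assert (Hb : 0 <= b) by (unfold b; nra).
  exists (fun y => psi c b L (nth 0 y 0%Z)). split.
  - intros y. apply psi_nonneg; auto.
  - intros y Hy. destruct d as [|d']; [lia|]. destruct y as [|y0 yr]; [simpl in Hy; lia|].
    rewrite lap_coord0, psi_diff. simpl nth.
    assert (HE : forall z, E c b (IZR (y0 - nth 0 z 0%Z)) <= 2 * c)
      by (intros; apply E_le; auto).
    destruct (Req_dec (nu0 (y0 :: yr)) 0) as [H0|H0].
    + rewrite H0. pose proof (sum_bound _ _ L HE) as Hs. fold N in Hs.
      apply Rmult_le_compat_l with (r := / (2 * INR (S d'))) in Hs;
        [|apply Rlt_le, Rinv_0_lt_compat; fold D; lra].
      fold D in Hs |- *.
      replace (/ (2 * D) * (N * (2 * c))) with (N / (N + 1)) in Hs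
        by (unfold c; field; lra).
      assert (N / (N + 1) <= 1).
      { apply (Rmult_le_reg_r (N + 1)); [lra|]. unfold Rdiv. rewrite Rmult_assoc, Rinv_l by lra. lra. }
      rewrite Rplus_0_l. eapply Rle_trans; [exact Hs|exact H].
    + assert (Hin := HL _ Hy H0).
      pose proof (sum_bound_in _ _ L _ Hin HE) as Hs. fold N in Hs. simpl nth in Hs.
      cbv beta in Hs. simpl nth in Hs. rewrite Z.sub_diag, E_0 in Hs.
      pose proof (sum_abs_ge nu0 L _ Hin) as Hnu. fold S0 in Hnu.
      fold D. change (INR (S d')) with D.
      match goal with |- _ + _ * ?X <= _ => set (Sg := X) in * end.
      assert (Hs' : Sg <= 2 * c * (N - 2 * b)). { assert (Sg + 2 * c <= 2 * c * (1 - 2 * b) + N * (2 * c)) by exact Hs. lra. }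
      apply Rmult_le_compat_l with (r := / (2 * D)) in Hs';
        [|apply Rlt_le, Rinv_0_lt_compat; lra].
      replace (/ (2 * D) * (2 * c * (N - 2 * b))) with (N / (N + 1) - 2 * S0) in Hs'
        by (unfold c, b; field; lra).
      assert (N / (N + 1) <= 1).
      { apply (Rmult_le_reg_r (N + 1)); [lra|]. unfold Rdiv. rewrite Rmult_assoc, Rinv_l by lra. lra. }
      lra.
Qed.

Lemma cv_le (a : nat -> R) l c : Un_cv a l -> (forall k, a k <= c) -> l <= c.
Proof. intros H1 H2. eapply Rle_cv_lim; [|exact H1|apply cv_const]; exact H2. Qed.

Lemma cv_ge (a : nat -> R) l c : Un_cv a l -> (forall k, c <= a k) -> c <= l.
Proof. intros H1 H2. eapply Rle_cv_lim; [|apply cv_const|exact H1]; exact H2. Qed.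

Lemma limit_fn d nu0 (hd : (1 <= d)%nat)
  (hfin : exists L : list site, forall x, length x = d -> nu0 x <> 0 -> In x L)
  xs : visits_all_io d xs ->
  exists U : site -> R,
    (forall x, length x = d -> Un_cv (fun k => u_k d nu0 xs k x) (U x)) /\
    (forall x, length x = d -> 0 <= U x) /\
    (forall x, length x = d -> nu0 x + laplacian d U x <= 1).
Proof.
  intros V. destruct (exists_w d nu0 hd hfin) as [w [Hw0 Hw]].
  assert (Hex : forall x, exists l, length x = d -> Un_cv (fun k => u_k d nu0 xs k x) l).
  { intros x. destruct (Nat.eq_dec (length x) d) as [Hx|Hx]; [|exists 0; intros; contradiction].
    assert (Hb : has_ub (fun k => u_k d nu0 xs k x)).
    { exists (w x). intros r [i ->]. apply (dom d nu0 hd w); auto. apply V. }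
    destruct (growing_cv _ (fun k => u_mono d nu0 xs k x) Hb) as [l Hl].
    exists l; auto. }
  set (U := fun x => proj1_sig (constructive_indefinite_description _ (Hex x))).
  assert (HU : forall x, length x = d -> Un_cv (fun k => u_k d nu0 xs k x) (U x)).
  { intros x Hx. unfold U. destruct constructive_indefinite_description; simpl; auto. }
  exists U. split; [|split]; auto.
  - intros x Hx. eapply cv_ge; [apply HU; auto|]. intros; apply u_nonneg.
  - intros x Hx. eapply nu_lim_le1; eauto. apply cv_nu; auto.
Qed.

Theorem proposition1p2 (d : nat) (nu0 : site -> R)
  (hd : (1 <= d)%nat)
  (hnonneg : forall x, length x = d -> 0 <= nu0 x)
  (hfin : exists L : list site, forall x, length x = d -> nu0 x <> 0 -> In x L) :
  exists u nu : site -> R,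
    (forall x, length x = d -> nu x <= 1) /\
    forall xs : nat -> site, visits_all_io d xs ->
      forall x, length x = d ->
        (forall k, u_k d nu0 xs k x <= u_k d nu0 xs (S k) x) /\
        Un_cv (fun k => u_k d nu0 xs k x) (u x) /\
        Un_cv (fun k => nu_k d nu0 xs k x) (nu x).
Proof.
  destruct (classic (exists xs, visits_all_io d xs)) as [[xs0 V0]|NV].
  - destruct (limit_fn d nu0 hd hfin xs0 V0) as [U0 [HC0 [HP0 HL0]]].
    exists U0, (fun x => nu0 x + laplacian d U0 x). split; [exact HL0|].
    intros xs V x Hx.
    destruct (limit_fn d nu0 hd hfin xs V) as [U1 [HC1 [HP1 HL1]]].
    assert (Heq : forall y, length y = d -> U1 y = U0 y).
    { intros y Hy. apply Rle_antisym.
      - eapply cv_le; [apply HC1; auto|]. intros k.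
        apply (dom d nu0 hd U0); auto. apply V.
      - eapply cv_le; [apply HC0; auto|]. intros k.
        apply (dom d nu0 hd U1); auto. apply V0. }
    assert (HC : forall y, length y = d -> Un_cv (fun k => u_k d nu0 xs k y) (U0 y)).
    { intros y Hy. rewrite <- Heq by auto. auto. }
    split; [intros; apply u_mono|]. split; auto.
    apply cv_nu; auto.
  - exists (fun _ => 0), (fun _ => 0). split; [intros; lra|].
    intros xs V. exfalso. apply NV. eauto.
Qed.
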